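(* Let $(X,\rho,\mu)$ be a space of homogeneous type with infinitely many points. Then precisely one of the following holds: (1) $\mu(X)<\infty$; (2) $X$ is countably infinite and there is $\delta>0$ with $\mu(\{x\})\ge\delta$ for all $x\in X$; (3) the measures $\mu(B)$ of balls $B\subseteq X$ take arbitrarily small and arbitrarily large values (i.e. $\inf_B\mu(B)=0$ and $\sup_B\mu(B)=\infty$).
   Context: A space of homogeneous type $(X,\rho,\mu)$: $\rho$ is a quasi-metric on $X$, i.e. it satisfies the axioms of a metric except that the triangle inequality is replaced by $\rho(x,y)\le A_0(\rho(x,z)+\rho(z,y))$ for some constant $A_0\ge 1$; balls are $B(x,r)=\{y\in X:\rho(x,y)<r\}$; $\mu$ is a positive Borel measure defined on a $\sigma$-algebra containing the balls, with the doubling property: there is $C\ge1$ such that $0<\mu(B(x,2r))\le C\mu(B(x,r))<\infty$ for all $x\in X$, $r>0$. *)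

(* Defs.v *)
From Stdlib Require Import Reals List.
Open Scope R_scope.

(* Extended nonnegative reals: finite values or +infinity. *)
Inductive ereal : Type := Fin (r : R) | PInf.

Definition ele (a b : ereal) : Prop :=
  match a, b with
  | Fin x, Fin y => x <= y
  | _, PInf => True
  | PInf, Fin _ => False
  end.

Definition eadd (a b : ereal) : ereal :=
  match a, b with
  | Fin x, Fin y => Fin (x + y)
  | _, _ => PInf
  end.

Fixpoint epsum (f : nat -> ereal) (n : nat) : ereal :=
  match n with
  | O => f O
  | S m => eadd (epsum f m) (f (S m))
  end.

Definition is_esum (f : nat -> ereal) (s : ereal) : Prop :=
  (forall n, ele (epsum f n) s) /\
  (forall t, (forall n, ele (epsum f n) t) -> ele s t).

Definition ball {X : Type} (rho : X -> X -> R) (x : X) (r : R) : X -> Prop :=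
  fun y => rho x y < r.

Definition quasi_metric {X : Type} (rho : X -> X -> R) (A0 : R) : Prop :=
  1 <= A0 /\
  (forall x y, 0 <= rho x y) /\
  (forall x y, rho x y = 0 <-> x = y) /\
  (forall x y, rho x y = rho y x) /\
  (forall x y z, rho x y <= A0 * (rho x z + rho z y)).

Definition sigma_algebra {X : Type} (M : (X -> Prop) -> Prop) : Prop :=
  M (fun _ => True) /\
  (forall A, M A -> M (fun x => ~ A x)) /\
  (forall A : nat -> X -> Prop, (forall n, M (A n)) -> M (fun x => exists n, A n x)).

Definition is_measure {X : Type} (M : (X -> Prop) -> Prop) (mu : (X -> Prop) -> ereal) : Prop :=
  mu (fun _ => False) = Fin 0 /\
  (forall A, M A -> ele (Fin 0) (mu A)) /\
  (forall A : nat -> X -> Prop,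
     (forall n, M (A n)) ->
     (forall i j x, i <> j -> A i x -> A j x -> False) ->
     is_esum (fun n => mu (A n)) (mu (fun x => exists n, A n x))).

Definition homogeneous_type {X : Type} (rho : X -> X -> R)
  (M : (X -> Prop) -> Prop) (mu : (X -> Prop) -> ereal) : Prop :=
  (exists A0, quasi_metric rho A0) /\
  sigma_algebra M /\
  (forall x r, M (ball rho x r)) /\
  is_measure M mu /\
  (exists C, 1 <= C /\
     forall x r, 0 < r ->
       exists a b, mu (ball rho x (2 * r)) = Fin a /\ mu (ball rho x r) = Fin b /\
                   0 < a /\ a <= C * b).

Definition infinite_type (X : Type) : Prop :=
  forall l : list X, exists x, ~ In x l.

Definition countably_infinite (X : Type) : Prop :=
  exists f : nat -> X, (forall m n, f m = f n -> m = n) /\ (forall x, exists n, f n = x).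

Definition exactly_one (P Q S : Prop) : Prop :=
  (P \/ Q \/ S) /\ ~ (P /\ Q) /\ ~ (P /\ S) /\ ~ (Q /\ S).

(* Main.v *)
Require Import Defs.
From Stdlib Require Import Reals List Lra Lia Classical ClassicalEpsilon FunctionalExtensionality PropExtensionality.
Open Scope R_scope.

Lemma pred_ext {X} (A B : X -> Prop) : (forall x, A x <-> B x) -> A = B.
Proof. intros H; apply functional_extensionality; intro x; apply propositional_extensionality; auto. Qed.

Lemma M_ext {X} (M : (X->Prop)->Prop) A B : M A -> (forall x, A x <-> B x) -> M B.
Proof. intros HA H; rewrite <- (pred_ext A B H); exact HA. Qed.

Lemma mu_ext {X} (mu : (X->Prop)->ereal) A B : (forall x, A x <-> B x) -> mu A = mu B.
Proof. intros H; rewrite (pred_ext A B H); reflexivity. Qed.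

Lemma M_compl {X} (M : (X->Prop)->Prop) A : sigma_algebra M -> M A -> M (fun x => ~ A x).
Proof. intros [_ [h _]] HA; auto. Qed.

Lemma M_cup {X} (M : (X->Prop)->Prop) (A : nat -> X -> Prop) : sigma_algebra M -> (forall n, M (A n)) -> M (fun x => exists n, A n x).
Proof. intros [_ [_ h]] HA; auto. Qed.

Lemma M_empty {X} (M : (X->Prop)->Prop) : sigma_algebra M -> M (fun _ => False).
Proof. intros hs. apply M_ext with (fun x : X => ~ True). apply M_compl; auto. apply hs. tauto. Qed.

Lemma M_union2 {X} (M : (X->Prop)->Prop) A B : sigma_algebra M -> M A -> M B -> M (fun x => A x \/ B x).
Proof.
  intros hs hA hB.
  apply M_ext with (fun x => exists n, (match n with O => A | _ => B end) x).
  - apply M_cup; auto. intros [|n]; auto.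
  - intro x; split. intros [[|n] h]; auto. intros [h|h]; [exists O|exists 1%nat]; auto.
Qed.

Lemma M_inter2 {X} (M : (X->Prop)->Prop) A B : sigma_algebra M -> M A -> M B -> M (fun x => A x /\ B x).
Proof.
  intros hs hA hB.
  apply M_ext with (fun x => ~ (~ A x \/ ~ B x)).
  - apply M_compl; auto. apply M_union2; auto; apply M_compl; auto.
  - intro x; tauto.
Qed.

Lemma epsum_ext f g n : (forall i, (i <= n)%nat -> f i = g i) -> epsum f n = epsum g n.
Proof.
  induction n; simpl; intros H.
  - apply H; lia.
  - rewrite IHn, H; auto; intros; apply H; lia.
Qed.

Lemma epsum_lb f n c : (forall i, (i<=n)%nat -> ele (Fin c) (f i)) -> ele (Fin (INR (S n) * c)) (epsum f n).
Proof.
  induction n; intros H.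
  - simpl. replace (1 * c) with c by ring. apply H; lia.
  - simpl epsum. assert (h1 := IHn (fun i hi => H i ltac:(lia))).
    assert (h2 := H (S n) ltac:(lia)).
    destruct (epsum f n); destruct (f (S n)); cbn [ele eadd] in *; auto.
    rewrite (S_INR (S n)). lra.
Qed.

Lemma epsum_repl0 f g n a b : f O = Fin a -> g O = Fin b -> (forall j, f (S j) = g (S j)) ->
  epsum g n = match epsum f n with Fin t => Fin (t - a + b) | PInf => PInf end.
Proof.
  intros Hf Hg Hfg. induction n; simpl.
  - rewrite Hf, Hg. f_equal; ring.
  - rewrite IHn, Hfg. destruct (epsum f n); destruct (g (S n)); simpl; auto. f_equal; ring.
Qed.

Lemma finite_lb {X} (M : (X->Prop)->Prop) mu (A : nat -> X -> Prop) (U : X -> Prop) n :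
  sigma_algebra M -> is_measure M mu -> M U ->
  (forall i, (i<=n)%nat -> M (A i)) ->
  (forall i j x, (i<=n)%nat -> (j<=n)%nat -> i<>j -> A i x -> A j x -> False) ->
  (forall i x, (i<=n)%nat -> A i x -> U x) ->
  ele (epsum (fun i => mu (A i)) n) (mu U).
Proof.
  intros hs hm hU hA hdis hsub.
  set (A' := fun i x => ((i <= n)%nat /\ A i x) \/ (i = S n /\ U x /\ ~ exists j, (j <= n)%nat /\ A j x)).
  destruct hm as [_ [_ hadd]].
  assert (HM: forall i, M (A' i)).
  { intro i. destruct (Compare_dec.le_lt_dec i n) as [h|h].
    - apply M_ext with (A i); auto. intro x; unfold A'; split; [left; auto|]. intros [[_ H]|[H _]]; auto; lia.
    - destruct (Nat.eq_dec i (S n)) as [e|e].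
      + apply M_ext with (fun x => U x /\ ~ (exists j, (j<=n)%nat /\ A j x)).
        * apply M_inter2; auto. apply M_compl; auto. apply M_cup; auto. intro j.
          destruct (Compare_dec.le_lt_dec j n).
          -- apply M_ext with (A j); auto. intro x; tauto.
          -- apply M_ext with (fun _ => False); [apply M_empty; auto|]. intro x; split; [tauto| intros [h' _]; lia].
        * intro x; unfold A'; split. intros; right; auto. intros [[h1 _]|[_ H]]; [lia|auto].
      + apply M_ext with (fun _ : X => False); [apply M_empty; auto|]. intro x; unfold A'; split; [tauto|]. intros [[h1 _]|[h1 _]]; lia.
  }
  assert (HD: forall i j x, i <> j -> A' i x -> A' j x -> False).
  { intros i j x hij [[hi ai]|[hi [ux nx]]] [[hj aj]|[hj [ux' nx']]].
    - exact (hdis i j x hi hj hij ai aj).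
    - apply nx'; eauto.
    - apply nx; eauto.
    - lia. }
  destruct (hadd A' HM HD) as [H1 _].
  specialize (H1 n).
  rewrite (mu_ext mu (fun x => exists k, A' k x) U) in H1.
  2:{ intro x; split.
      - intros [k [[hk ak]|[_ [ux _]]]]; eauto.
      - intro ux. destruct (classic (exists j, (j<=n)%nat /\ A j x)) as [[j [hj aj]]|nx].
        + exists j; left; auto.
        + exists (S n); right; auto. }
  rewrite (epsum_ext (fun i => mu (A' i)) (fun i => mu (A i))) in H1; auto.
  intros i hi. apply mu_ext. intro x; unfold A'; split; [intros [[_ h]|[h _]]; auto; lia| intros; left; auto].
Qed.

Lemma least_nat (P : nat -> Prop) : (exists n, P n) -> exists n, P n /\ forall m, P m -> (n <= m)%nat.
Proof.
  intros [n Hn]. revert Hn. induction n as [n IH] using (well_founded_induction Wf_nat.lt_wf). intros Hn.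
  destruct (classic (exists m, (m < n)%nat /\ P m)) as [[m [hm pm]]|hno].
  - exact (IH m hm pm).
  - exists n; split; auto. intros m pm. destruct (Compare_dec.le_lt_dec n m); auto. exfalso; apply hno; eauto.
Qed.

Definition rr (k : nat) : R := / (INR k + 1).

Lemma rr_pos k : 0 < rr k.
Proof. unfold rr. apply Rinv_0_lt_compat. pose proof (pos_INR k); lra. Qed.

Lemma rr_anti j k : (j <= k)%nat -> rr k <= rr j.
Proof.
  intros h. unfold rr. apply Rinv_le_contravar. pose proof (pos_INR j); lra.
  apply le_INR in h; lra.
Qed.

Lemma rr_small a : 0 < a -> exists k, rr k < a.
Proof.
  intros ha. destruct (INR_unbounded (/ a)) as [k hk]. exists k. unfold rr.
  rewrite <- (Rinv_inv a). apply Rinv_lt_contravar.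
  - apply Rmult_lt_0_compat. apply Rinv_0_lt_compat; auto. pose proof (pos_INR k); lra.
  - lra.
Qed.

Lemma INR_lt_step i j : (i < j)%nat -> INR i + 1 <= INR j.
Proof. intros h. apply le_INR in h. rewrite S_INR in h. lra. Qed.

Lemma ele_trans a b c : ele a b -> ele b c -> ele a c.
Proof. destruct a, b, c; simpl; intuition lra. Qed.

Lemma qm_zero {X} (rho : X -> X -> R) A0 : quasi_metric rho A0 -> forall x y, rho x y = 0 <-> y = x.
Proof. intros [_ [_ [h _]]] x y. rewrite h. split; auto. Qed.

Lemma qm_nonneg {X} (rho : X -> X -> R) A0 : quasi_metric rho A0 -> forall x y, 0 <= rho x y.
Proof. intros [_ [h _]]; auto. Qed.

Lemma single_M {X} (rho : X -> X -> R) M mu (x : X) :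
  homogeneous_type rho M mu -> M (fun y => y = x).
Proof.
  intros [[A0 hq] [hs [hb _]]].
  apply M_ext with (fun y => ~ exists k, ~ ball rho x (rr k) y).
  - apply M_compl; auto. apply M_cup; auto. intro k. apply M_compl; auto.
  - intro y. split.
    + intros h. apply NNPP. intro hne.
      assert (h0 : rho x y <> 0) by (intro e; apply hne; apply (qm_zero rho A0 hq); auto).
      pose proof (qm_nonneg rho A0 hq x y).
      destruct (rr_small (rho x y)) as [k hk]; [lra|].
      apply h. exists k. unfold ball. lra.
    + intros -> [k hk]. apply hk. unfold ball.
      rewrite (proj2 (qm_zero rho A0 hq x x) eq_refl). apply rr_pos.
Qed.

Lemma ball_fin {X} (rho : X -> X -> R) M mu x r :
  homogeneous_type rho M mu -> 0 < r -> exists b, mu (ball rho x r) = Fin b /\ 0 <= b.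
Proof.
  intros [_ [_ [hb [hm [C [_ hd]]]]]] hr.
  destruct (hd x r hr) as [a [b [_ [hbb _]]]]. exists b; split; auto.
  destruct hm as [_ [hnn _]]. specialize (hnn _ (hb x r)). rewrite hbb in hnn. exact hnn.
Qed.

Lemma le_mono {X} (rho : X -> X -> R) M mu A U :
  homogeneous_type rho M mu -> M A -> M U -> (forall x, A x -> U x) -> ele (mu A) (mu U).
Proof.
  intros [_ [hs [_ [hm _]]]] hA hU hAU.
  apply (finite_lb M mu (fun _ => A) U 0 hs hm hU); auto.
  intros i j x hi hj hij; lia.
Qed.

Lemma excl12 {X} (rho : X -> X -> R) M mu :
  homogeneous_type rho M mu -> (exists m, mu (fun _ => True) = Fin m) ->
  (countably_infinite X /\ exists delta, 0 < delta /\ forall x, ele (Fin delta) (mu (fun y => y = x))) -> False.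
Proof.
  intros H [m hm] [[f [finj fsur]] [d [hd hpt]]].
  destruct H as [hq [hs [hb [hme hdb]]]] eqn:EH.
  destruct (INR_unbounded (m / d)) as [n hn].
  assert (h1 := finite_lb M mu (fun i => fun y => y = f i) (fun _ => True) n hs hme (proj1 hs)).
  assert (h2 := epsum_lb (fun i => mu (fun y => y = f i)) n d (fun i _ => hpt (f i))).
  rewrite hm in h1.
  assert (h3 : ele (epsum (fun i => mu (fun y => y = f i)) n) (Fin m)).
  { apply h1. intros i _; apply (single_M rho M mu (f i) H).
    intros i j x _ _ hij -> e. apply hij, finj; auto.
    auto. }
  assert (h4 := ele_trans _ _ _ h2 h3). cbn [ele] in h4. rewrite S_INR in h4.
  assert (m < INR n * d). { apply Rmult_lt_compat_r with (r := d) in hn; auto.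
    unfold Rdiv in hn. rewrite Rmult_assoc, Rinv_l in hn; lra. }
  nra.
Qed.

Lemma excl13 {X} (rho : X -> X -> R) M mu :
  homogeneous_type rho M mu -> (exists m, mu (fun _ => True) = Fin m) ->
  (forall K, exists x r, 0 < r /\ ~ ele (mu (ball rho x r)) (Fin K)) -> False.
Proof.
  intros H [m hm] hK. destruct (hK m) as [x [r [hr hn]]]. apply hn. rewrite <- hm.
  destruct H as [hq [hs [hb [hme hdb]]]] eqn:EH.
  apply (le_mono rho M mu); auto. apply hs.
Qed.

Lemma excl23 {X} (rho : X -> X -> R) M mu :
  homogeneous_type rho M mu ->
  (exists delta, 0 < delta /\ forall x, ele (Fin delta) (mu (fun y => y = x))) ->
  (forall eps, 0 < eps -> exists x r, 0 < r /\ exists m, mu (ball rho x r) = Fin m /\ m < eps) -> False.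
Proof.
  intros H [d [hd hpt]] hinf. destruct (hinf d hd) as [x [r [hr [m [hm hlt]]]]].
  destruct H as [[A0 hq] [hs [hb [hme hdb]]]] eqn:EH.
  assert (h := le_mono rho M mu (fun y => y = x) (ball rho x r) H (single_M rho M mu x H) (hb x r)).
  rewrite hm in h. assert (h2 := ele_trans _ _ _ (hpt x) (h ltac:(intros y ->; unfold ball;
    rewrite (proj2 (qm_zero rho A0 hq x x) eq_refl); lra))).
  simpl in h2; lra.
Qed.

Lemma sup_part {X} (rho : X -> X -> R) M mu (x0 : X) :
  homogeneous_type rho M mu -> ~ (exists m, mu (fun _ => True) = Fin m) ->
  forall K, exists x r, 0 < r /\ ~ ele (mu (ball rho x r)) (Fin K).
Proof.
  intros H hinf K. apply NNPP. intro hno.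
  assert (hall : forall x r, 0 < r -> ele (mu (ball rho x r)) (Fin K)).
  { intros x r hr. apply NNPP; intro hn. apply hno; eauto. }
  destruct H as [[A0 hq] [hs [hb [hme hdb]]]] eqn:EH.
  set (A := fun (n : nat) y => INR n <= rho x0 y < INR n + 1).
  assert (HM : forall n, M (A n)).
  { intro n. apply M_ext with (fun y => ~ ball rho x0 (INR n) y /\ ball rho x0 (INR n + 1) y).
    apply M_inter2; auto. apply M_compl; auto. intro y; unfold A, ball; split; intros [h1 h2]; split; lra. }
  assert (HD : forall i j y, i <> j -> A i y -> A j y -> False).
  { intros i j y hij [h1 h2] [h3 h4]. destruct (Compare_dec.lt_eq_lt_dec i j) as [[h|h]|h].
    - apply INR_lt_step in h; lra.
    - auto.
    - apply INR_lt_step in h; lra. }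
  destruct hme as [h0 [hnn hadd]].
  destruct (hadd A HM HD) as [_ hlub].
  assert (E : mu (fun x => exists n, A n x) = mu (fun _ => True)).
  { apply mu_ext. intro y; split; auto. intros _.
    destruct (least_nat (fun n => rho x0 y < INR n + 1)) as [n [hn hmin]].
    { destruct (INR_unbounded (rho x0 y)) as [n hn]; exists n; lra. }
    exists n. split; auto. destruct n as [|m].
    - simpl. apply (qm_nonneg rho A0 hq).
    - destruct (Rlt_or_le (rho x0 y) (INR m + 1)) as [h|h]; [specialize (hmin m h); lia|].
      rewrite S_INR; auto. }
  rewrite E in hlub.
  assert (hle : ele (mu (fun _ => True)) (Fin K)).
  { apply hlub. intro n. apply ele_trans with (mu (ball rho x0 (INR n + 1))).
    - apply (finite_lb M mu A _ n hs (conj h0 (conj hnn hadd))); auto.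
      intros i j y _ _; apply HD.
      intros i y hi [_ h]. unfold ball. apply le_INR in hi. lra.
    - apply hall. pose proof (pos_INR n); lra. }
  destruct (mu (fun _ => True)) eqn:e; simpl in hle; [|contradiction]. apply hinf; eauto.
Qed.

Lemma point_mass {X} (rho : X -> X -> R) M mu (eps : R) :
  homogeneous_type rho M mu -> 0 < eps ->
  (forall x r m, 0 < r -> mu (ball rho x r) = Fin m -> eps <= m) ->
  forall x, ele (Fin eps) (mu (fun y => y = x)).
Proof.
  intros H he hball x.
  destruct H as [[A0 hq] [hs [hb [hme hdb]]]] eqn:EH.
  set (B := fun k => ball rho x (rr k)).
  set (D := fun j y => B j y /\ ~ B (S j) y).
  assert (Bmono : forall j k y, (j <= k)%nat -> B k y -> B j y).
  { intros j k y h. unfold B, ball. pose proof (rr_anti j k h). lra. }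
  assert (Bx : forall k, B k x).
  { intro k. unfold B, ball. rewrite (proj2 (qm_zero rho A0 hq x x) eq_refl). apply rr_pos. }
  assert (HMD : forall j, M (D j)).
  { intro j. unfold D, B. apply M_inter2; auto. apply (M_compl M (ball rho x (rr (S j)))); auto. }
  destruct (ball_fin rho M mu x (rr O) H (rr_pos 0)) as [T [hT _]].
  assert (hS := le_mono rho M mu (fun y => y = x) (B O) H (single_M rho M mu x H) (hb _ _)
                  ltac:(intros y ->; apply Bx)).
  change (ball rho x (rr O)) with (B O) in hT. rewrite hT in hS.
  destruct (mu (fun y => y = x)) as [s|] eqn:es; [|contradiction].
  assert (decomp : forall k y, B O y -> ~ B k y -> exists j, (j < k)%nat /\ D j y).
  { induction k; intros y h0 hk. contradiction.
    destruct (classic (B k y)) as [h|h].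
    - exists k; split; [lia|]. split; auto.
    - destruct (IHk y h0 h) as [j [hj hd]]. exists j; split; [lia|auto]. }
  assert (stepb : forall k, exists e0, mu (B k) = Fin e0 /\ eps <= e0 /\
     ele (epsum (fun i => mu (match i with O => B k | S j => D j end)) k) (Fin T)).
  { intro k. destruct (ball_fin rho M mu x (rr k) H (rr_pos k)) as [e0 [he0 _]].
    exists e0; split; auto. split. apply (hball x (rr k)); auto. apply rr_pos.
    rewrite <- hT.
    apply (finite_lb M mu _ _ k hs hme (hb _ _)).
    - intros [|j] _; [apply hb|apply HMD].
    - intros [|i] [|j] y hi hj hij; auto.
      + intros hk [_ hd]. apply hd. apply (Bmono (S j) k); auto.
      + intros [_ hd] hk. apply hd. apply (Bmono (S i) k); auto.
      + intros [hi1 hi2] [hj1 hj2]. destruct (Compare_dec.lt_eq_lt_dec i j) as [[h|h]|h].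
        * apply hi2. apply (Bmono (S i) j); auto.
        * auto.
        * apply hj2. apply (Bmono (S j) i); auto.
    - intros [|j] y _ h.
      + apply (Bmono O k); auto; lia.
      + apply (Bmono O j); [lia|apply h]. }
  set (G := fun i => match i with O => (fun y => y = x) | S j => D j end).
  assert (HMG : forall i, M (G i)).
  { intros [|j]; simpl; auto. apply (single_M rho M mu x H). }
  assert (HDG : forall i j y, i <> j -> G i y -> G j y -> False).
  { intros [|i] [|j] y hij; simpl; auto.
    + intros -> [_ hd]. apply hd, Bx.
    + intros [_ hd] ->. apply hd, Bx.
    + intros [hi1 hi2] [hj1 hj2]. destruct (Compare_dec.lt_eq_lt_dec i j) as [[h|h]|h].
      * apply hi2. apply (Bmono (S i) j); auto.
      * auto.
      * apply hj2. apply (Bmono (S j) i); auto. }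
  destruct hme as [h0 [hnn hadd]].
  destruct (hadd G HMG HDG) as [_ hlub].
  assert (EU : mu (fun y => exists n, G n y) = mu (B O)).
  { apply mu_ext. intro y; split.
    - intros [[|j] h]; simpl in h. subst; apply Bx. apply (Bmono O j); [lia|apply h].
    - intro h. destruct (classic (y = x)) as [e|ne]. exists O; exact e.
      assert (h1 : rho x y <> 0) by (intro e; apply ne; apply (qm_zero rho A0 hq); auto).
      pose proof (qm_nonneg rho A0 hq x y).
      destruct (rr_small (rho x y)) as [k hk]; [lra|].
      destruct (decomp k y h) as [j [_ hj]]. unfold B, ball; lra. exists (S j); exact hj. }
  rewrite EU, hT in hlub.
  assert (hf : ele (Fin T) (Fin (T - eps + s))).
  { apply hlub. intro k. destruct (stepb k) as [e0 [he0 [hle hk]]].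
    rewrite (epsum_repl0 (fun i => mu (match i with O => B k | S j => D j end)) (fun i => mu (G i)) k e0 s he0 es (fun j => eq_refl)).
    destruct (epsum _ k); simpl in *; [lra|contradiction]. }
  simpl in hf. simpl. lra.
Qed.

Fixpoint Fl {X} (ch : list X -> X) (k : nat) : list X :=
  match k with O => nil | S k => ch (Fl ch k) :: Fl ch k end.

Lemma Fl_In {X} (ch : list X -> X) k z : In z (Fl ch k) <-> exists j, (j < k)%nat /\ ch (Fl ch j) = z.
Proof.
  induction k; simpl. split; [tauto|intros [j [h _]]; lia].
  rewrite IHk. split.
  - intros [e|[j [hj e]]]. exists k; split; auto. exists j; split; auto.
  - intros [j [hj e]]. destruct (Nat.eq_dec j k). subst; auto. right; exists j; split; auto; lia.
Qed.

Lemma Fl_NoDup {X} (ch : list X -> X) : (forall l, ~ In (ch l) l) -> forall k, NoDup (Fl ch k).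
Proof. intros h; induction k; simpl; constructor; auto. Qed.

Lemma Fl_length {X} (ch : list X -> X) k : length (Fl ch k) = k.
Proof. induction k; simpl; auto. Qed.

Lemma list_bound {X} (rho : X -> X -> R) M mu (x0 : X) eps Rr b (l : list X) :
  homogeneous_type rho M mu -> 0 < eps ->
  (forall x, ele (Fin eps) (mu (fun y => y = x))) ->
  mu (ball rho x0 Rr) = Fin b -> 0 <= b ->
  NoDup l -> (forall z, In z l -> rho x0 z < Rr) -> INR (length l) * eps <= b.
Proof.
  intros H he hpt hb hb0 hnd hin.
  destruct l as [|d l']. simpl; lra.
  destruct H as [[A0 hq] [hs [hbm [hme hdb]]]] eqn:EH.
  assert (h1 := finite_lb M mu (fun i => fun y => y = nth i (d :: l') d) (ball rho x0 Rr) (length l') hs hme (hbm _ _)).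
  assert (h3 : ele (epsum (fun i => mu (fun y => y = nth i (d :: l') d)) (length l')) (Fin b)).
  { rewrite <- hb. apply h1.
    - intros i _; apply (single_M rho M mu _ H).
    - intros i j x hi hj hij -> e. apply hij. apply (proj1 (NoDup_nth (d :: l') d) hnd); simpl; auto; lia.
    - intros i x hi ->. apply hin. apply nth_In. simpl; lia. }
  assert (h2 := epsum_lb (fun i => mu (fun y => y = nth i (d :: l') d)) (length l') eps (fun i _ => hpt _)).
  assert (h4 := ele_trans _ _ _ h2 h3). cbn [ele] in h4. simpl length. exact h4.
Qed.

Lemma count_part {X} (rho : X -> X -> R) M mu (x0 : X) eps :
  homogeneous_type rho M mu -> infinite_type X -> 0 < eps ->
  (forall x, ele (Fin eps) (mu (fun y => y = x))) -> countably_infinite X.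
Proof.
  intros H hinf he hpt.
  assert (ex_choose : forall l : list X, exists y, ~ In y l /\
     forall z N, ~ In z l -> rho x0 z < INR N + 1 -> rho x0 y < INR N + 1).
  { intro l. destruct (hinf l) as [z0 hz0].
    destruct (least_nat (fun n => exists y, ~ In y l /\ rho x0 y < INR n + 1)) as [n [[y [hy1 hy2]] hmin]].
    { destruct (INR_unbounded (rho x0 z0)) as [n hn]. exists n, z0; split; auto; lra. }
    exists y; split; auto. intros z N hz hzN.
    assert (hnN : (n <= N)%nat) by (apply hmin; eauto). apply le_INR in hnN. lra. }
  set (ch := fun l => proj1_sig (constructive_indefinite_description _ (ex_choose l))).
  assert (hch : forall l, ~ In (ch l) l /\ forall z N, ~ In z l -> rho x0 z < INR N + 1 -> rho x0 (ch l) < INR N + 1).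
  { intro l. exact (proj2_sig (constructive_indefinite_description _ (ex_choose l))). }
  exists (fun k => ch (Fl ch k)). split.
  - intros m n e. destruct (Compare_dec.lt_eq_lt_dec m n) as [[h|h]|h]; auto.
    + exfalso. apply (proj1 (hch (Fl ch n))). rewrite <- e. apply Fl_In. eauto.
    + exfalso. apply (proj1 (hch (Fl ch m))). rewrite e. apply Fl_In. eauto.
  - intro x. apply NNPP. intro hno.
    destruct (INR_unbounded (rho x0 x)) as [N hN].
    assert (hnot : forall k, ~ In x (Fl ch k)).
    { intros k hk. apply Fl_In in hk. destruct hk as [j [_ e]]. eauto. }
    assert (hall : forall k z, In z (Fl ch k) -> rho x0 z < INR N + 1).
    { intros k z hz. apply Fl_In in hz. destruct hz as [j [_ <-]].
      apply (proj2 (hch (Fl ch j)) x); auto. lra. }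
    destruct (ball_fin rho M mu x0 (INR N + 1) H ltac:(pose proof (pos_INR N); lra)) as [b [hb hb0]].
    destruct (INR_unbounded (b / eps)) as [k hk].
    assert (hbd := list_bound rho M mu x0 eps _ b (Fl ch k) H he hpt hb hb0
                    (Fl_NoDup ch (fun l => proj1 (hch l)) k) (hall k)).
    rewrite Fl_length in hbd.
    apply Rmult_lt_compat_r with (r := eps) in hk; auto.
    unfold Rdiv in hk. rewrite Rmult_assoc, Rinv_l in hk; lra.
Qed.

Theorem lemma2p4 (X : Type) (rho : X -> X -> R)
  (M : (X -> Prop) -> Prop) (mu : (X -> Prop) -> ereal) :
  homogeneous_type rho M mu ->
  infinite_type X ->
  exactly_one
    (* (1) mu(X) < oo *)
    (exists m, mu (fun _ => True) = Fin m)
    (* (2) X countably infinite and point masses bounded below *)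
    (countably_infinite X /\
     exists delta, 0 < delta /\ forall x, ele (Fin delta) (mu (fun y => y = x)))
    (* (3) inf over balls of mu(B) = 0 and sup = oo *)
    ((forall eps, 0 < eps -> exists x r, 0 < r /\ exists m,
        mu (ball rho x r) = Fin m /\ m < eps) /\
     (forall K, exists x r, 0 < r /\ ~ ele (mu (ball rho x r)) (Fin K))).
Proof.
  intros H hinf. destruct (hinf nil) as [x0 _].
  split; [|split; [|split]].
  - destruct (classic (exists m, mu (fun _ => True) = Fin m)) as [h1|h1]; [left; auto|right].
    destruct (classic (forall eps, 0 < eps -> exists x r, 0 < r /\ exists m,
        mu (ball rho x r) = Fin m /\ m < eps)) as [h3|h3].
    + right. split; auto. apply (sup_part rho M mu x0 H h1).
    + left.
      assert (hex : exists eps, 0 < eps /\ forall x r m, 0 < r -> mu (ball rho x r) = Fin m -> eps <= m).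
      { apply NNPP; intro hn. apply h3. intros eps he. apply NNPP; intro hn2.
        apply hn. exists eps; split; auto. intros x r m hr hm.
        destruct (Rlt_or_le m eps) as [h|h]; auto. exfalso; apply hn2. exists x, r; split; eauto. }
      destruct hex as [eps [he hball]].
      assert (hpt := point_mass rho M mu eps H he hball).
      split. apply (count_part rho M mu x0 eps H hinf he hpt). eauto.
  - intros [h1 h2]. exact (excl12 rho M mu H h1 h2).
  - intros [h1 [_ h3]]. exact (excl13 rho M mu H h1 h3).
  - intros [[_ h2] [h3 _]]. exact (excl23 rho M mu H h2 h3).
Qed.
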